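(* Let $G$ be a graph with finitely many vertices, and let $v\in G^0$ be a regular vertex which does not support a loop of length one. Define a graph $E$ as follows: - $E^0=G^0\setminus\{v\}$; - $E^1=(G^1\setminus(r^{-1}(v)\cup s^{-1}(v)))\cup\{[ef]: e\in r^{-1}(v),\ f\in s^{-1}(v)\}$; - range and source maps extend those of $G$, with $r_E([ef])=r_G(f)$ and $s_E([ef])=s_G(e)$. Then $G\sim_M E$.
   Context: A graph $G=(G^0,G^1,r,s)$ has vertex set $G^0$, edge set $G^1$, and range/source maps; multiple edges and loops are allowed. A source receives no edges, a sink emits no edges, and an infinite emitter emits infinitely many edges. A vertex is singular if it is a sink or infinite emitter, and regular otherwise. A vertex $v$ supports a loop of length one if there is an edge $e$ with $s(e)=r(e)=v$. Move-equivalence $\sim_M$ is the smallest equivalence relation on graphs with finitely many vertices such that $G\sim_M E$ whenever $E$ is isomorphic to a graph obtained from $G$ by one of the following moves. (S) Delete a regular source together with the edges it emits. (R) For a regular vertex $u$ emitting exactly one edge $f$, with $r(f)\neq u$, and all of whose incoming edges have the same source $v$: delete $u$, $f$ and the edges into $u$, and add for each $e\in r^{-1}(u)$ an edge $[ef]$ from $v$ to $r(f)$. (O) Out-splitting at a non-sink $v$ along a partition $\mathcal E_1,\dots,\mathcal E_n$ of $s^{-1}(v)$ with at most one infinite part. Replace $v$ by $v^1,\dots,v^n$. Each edge $e$ into $v$ becomes copies $e^1,\dots,e^n$ with $r(e^i)=v^i$ and source $s(e)$, or source $v^j$ if $s(e)=v$ and $e\in\mathcal E_j$. An edge from $v$ to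 $w\neq v$ lying in $\mathcal E_i$ gets source $v^i$. (I) In-splitting at a regular non-source $v$ along a partition $\mathcal E_1,\dots,\mathcal E_n$ of $r^{-1}(v)$. Replace $v$ by $v^1,\dots,v^n$. Each edge $e$ out of $v$ becomes copies $e^1,\dots,e^n$ with $s(e^i)=v^i$ and range $r(e)$, or range $v^j$ if $r(e)=v$ and $e\in\mathcal E_j$. An edge into $v$ from $w\neq v$ lying in $\mathcal E_i$ gets range $v^i$. *)

(* Defs.v *)
From HB Require Import structures.
From mathcomp Require Import all_boot.

Set Implicit Arguments.
Unset Strict Implicit.
Unset Printing Implicit Defensive.

Record graph := Graph {
  gV : finType;
  gE : Type;
  rg : gE -> gV;
  sg : gE -> gV
}.
Arguments rg {g} e.
Arguments sg {g} e.

Definition finite_set (T : Type) (P : T -> Prop) : Prop :=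
  exists (n : nat) (f : 'I_n -> T), forall x, P x -> exists i, f i = x.

Definition is_sink (G : graph) (v : gV G) : Prop := forall e : gE G, sg e <> v.
Definition is_source (G : graph) (v : gV G) : Prop := forall e : gE G, rg e <> v.
Definition is_inf_emitter (G : graph) (v : gV G) : Prop :=
  ~ finite_set (fun e : gE G => sg e = v).
Definition is_singular (G : graph) (v : gV G) : Prop :=
  is_sink v \/ is_inf_emitter v.
Definition is_regular (G : graph) (v : gV G) : Prop := ~ is_singular v.
Definition supports_loop (G : graph) (v : gV G) : Prop :=
  exists e : gE G, sg e = v /\ rg e = v.

Definition graph_iso (G H : graph) : Prop :=
  exists (f0 : gV G -> gV H) (f1 : gE G -> gE H),
    [/\ bijective f0, bijective f1,
        (forall e, rg (f1 e) = f0 (rg e)) & (forall e, sg (f1 e) = f0 (sg e))].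

Definition delV (G : graph) (u : gV G) : finType := {x : gV G | x != u}.

Definition untouched (G : graph) (u : gV G) : Type :=
  {e : gE G | sg e != u /\ rg e != u}.

Definition unt_r (G : graph) (u : gV G) (e : untouched u) : delV u :=
  exist (fun x => x != u) (rg (sval e)) (proj2 (svalP e)).
Definition unt_s (G : graph) (u : gV G) (e : untouched u) : delV u :=
  exist (fun x => x != u) (sg (sval e)) (proj1 (svalP e)).

(* ---------- Move (S): delete the vertex u (a source) and its emitted edges.
   Since u is a source in the move, the edges removed are exactly s^{-1}(u). *)
Definition del_graph (G : graph) (u : gV G) : graph :=
  @Graph (delV u) (untouched u) (@unt_r G u) (@unt_s G u).

Lemma reduce_src_ok (G : graph) (u : gV G) (f : gE G)
  (hf : forall e : gE G, sg e = u -> e = f) (hrf : rg f != u) :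
  forall e : gE G, rg e = u -> sg e != u.
Proof.
move=> e hre; apply/eqP=> hse; have hef := hf e hse.
by move: hrf; rewrite -hef hre eqxx.
Qed.

Definition reduce_E (G : graph) (u : gV G) : Type :=
  (untouched u + {e : gE G | rg e = u})%type.

Definition reduce_r (G : graph) (u : gV G) (f : gE G) (hrf : rg f != u)
  (e : reduce_E u) : delV u :=
  match e with
  | inl e' => unt_r e'
  | inr _ => exist (fun x => x != u) (rg f) hrf   (* r([ef]) = r(f) *)
  end.

Definition reduce_s (G : graph) (u : gV G) (f : gE G)
  (hf : forall e : gE G, sg e = u -> e = f) (hrf : rg f != u)
  (e : reduce_E u) : delV u :=
  match e with
  | inl e' => unt_s e'
  | inr e' => exist (fun x => x != u) (sg (sval e'))
                    (reduce_src_ok hf hrf (svalP e'))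
  end.

Definition reduce_graph (G : graph) (u : gV G) (f : gE G)
  (hf : forall e : gE G, sg e = u -> e = f) (hrf : rg f != u) : graph :=
  @Graph (delV u) (reduce_E u) (reduce_r hrf) (reduce_s hf hrf).

(* The partition E_1,...,E_n of s^{-1}(v)
   is given by [part : gE G -> 'I_n] (only its values on s^{-1}(v) matter);
   E_i = {e | s e = v /\ part e = i}.  New vertices: old vertices other than v,
   plus v^1..v^n (= inr i).  New edges: edges with range <> v (kept), plus
   copies e^i (= inr (e, i)) of edges e into v. *)
Definition split_V (G : graph) (v : gV G) (n : nat) : finType :=
  (delV v + 'I_n)%type.

Definition out_src (G : graph) (v : gV G) (n : nat) (part : gE G -> 'I_n)
  (e : gE G) : split_V v n :=
  match insub (sT := delV v) (sg e) with
  | Some x => inl x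
  | None => inr (part e)
  end.

Definition out_E (G : graph) (v : gV G) (n : nat) : Type :=
  ({e : gE G | rg e != v} + ({e : gE G | rg e = v} * 'I_n))%type.

Definition out_r (G : graph) (v : gV G) (n : nat) (e : out_E v n) : split_V v n :=
  match e with
  | inl e' => inl (exist (fun x => x != v) (rg (sval e')) (svalP e'))
  | inr (_, i) => inr i
  end.

Definition out_s (G : graph) (v : gV G) (n : nat) (part : gE G -> 'I_n)
  (e : out_E v n) : split_V v n :=
  match e with
  | inl e' => out_src v part (sval e')
  | inr (e', _) => out_src v part (sval e')
  end.

Definition outsplit_graph (G : graph) (v : gV G) (n : nat) (part : gE G -> 'I_n)
  : graph := @Graph (split_V v n) (out_E v n) (@out_r G v n) (out_s part).

(* ---------- Move (I): in-splitting.  Partition E_1..E_n of r^{-1}(v) given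
   by [part], E_i = {e | r e = v /\ part e = i}. *)
Definition in_tgt (G : graph) (v : gV G) (n : nat) (part : gE G -> 'I_n)
  (e : gE G) : split_V v n :=
  match insub (sT := delV v) (rg e) with
  | Some x => inl x
  | None => inr (part e)
  end.

Definition in_E (G : graph) (v : gV G) (n : nat) : Type :=
  ({e : gE G | sg e != v} + ({e : gE G | sg e = v} * 'I_n))%type.

Definition in_s (G : graph) (v : gV G) (n : nat) (e : in_E v n) : split_V v n :=
  match e with
  | inl e' => inl (exist (fun x => x != v) (sg (sval e')) (svalP e'))
  | inr (_, i) => inr i
  end.

Definition in_r (G : graph) (v : gV G) (n : nat) (part : gE G -> 'I_n)
  (e : in_E v n) : split_V v n :=
  match e with
  | inl e' => in_tgt v part (sval e')
  | inr (e', _) => in_tgt v part (sval e')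
  end.

Definition insplit_graph (G : graph) (v : gV G) (n : nat) (part : gE G -> 'I_n)
  : graph := @Graph (split_V v n) (in_E v n) (in_r part) (@in_s G v n).

Inductive move_step : graph -> graph -> Prop :=
| move_S (G H : graph) (u : gV G) :
    is_regular u -> is_source u ->
    graph_iso H (del_graph u) -> move_step G H
| move_R (G H : graph) (u : gV G) (f : gE G)
    (hsf : sg f = u)
    (hf : forall e : gE G, sg e = u -> e = f)
    (hrf : rg f != u) :
    is_regular u ->
    (exists w : gV G, forall e : gE G, rg e = u -> sg e = w) ->
    graph_iso H (reduce_graph hf hrf) -> move_step G H
| move_O (G H : graph) (v : gV G) (n : nat) (part : gE G -> 'I_n) :
    ~ is_sink v ->
    (forall i : 'I_n, exists e : gE G, sg e = v /\ part e = i) ->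
    (forall i j : 'I_n, i != j ->
        finite_set (fun e : gE G => sg e = v /\ part e = i) \/
        finite_set (fun e : gE G => sg e = v /\ part e = j)) ->
    graph_iso H (outsplit_graph v part) -> move_step G H
| move_I (G H : graph) (v : gV G) (n : nat) (part : gE G -> 'I_n) :
    is_regular v -> ~ is_source v ->
    (forall i : 'I_n, exists e : gE G, rg e = v /\ part e = i) ->
    graph_iso H (insplit_graph v part) -> move_step G H.

Inductive move_eq : graph -> graph -> Prop :=
| meq_step G H : move_step G H -> move_eq G H
| meq_refl G : move_eq G G
| meq_sym G H : move_eq G H -> move_eq H G
| meq_trans G H K : move_eq G H -> move_eq H K -> move_eq G K.

Lemma noloop_r (G : graph) (v : gV G) (hl : ~ supports_loop v) :
  forall e : gE G, sg e = v -> rg e != v.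
Proof. by move=> e hs; apply/eqP=> hr; apply: hl; exists e. Qed.

Lemma noloop_s (G : graph) (v : gV G) (hl : ~ supports_loop v) :
  forall e : gE G, rg e = v -> sg e != v.
Proof. by move=> e hr; apply/eqP=> hs; apply: hl; exists e. Qed.

(* edges: G^1 \ (r^{-1}(v) U s^{-1}(v)), plus [ef] = inr (e, f) *)
Definition collapse_E (G : graph) (v : gV G) : Type :=
  (untouched v + {p : gE G * gE G | rg p.1 = v /\ sg p.2 = v})%type.

Definition collapse_r (G : graph) (v : gV G) (hl : ~ supports_loop v)
  (e : collapse_E v) : delV v :=
  match e with
  | inl e' => unt_r e'
  | inr p => exist (fun x => x != v) (rg (sval p).2)
                   (noloop_r hl (proj2 (svalP p)))
  end.

Definition collapse_s (G : graph) (v : gV G) (hl : ~ supports_loop v)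
  (e : collapse_E v) : delV v :=
  match e with
  | inl e' => unt_s e'
  | inr p => exist (fun x => x != v) (sg (sval p).1)
                   (noloop_s hl (proj1 (svalP p)))
  end.

Definition collapse_graph (G : graph) (v : gV G) (hl : ~ supports_loop v) : graph :=
  @Graph (delV v) (collapse_E v) (collapse_r hl) (collapse_s hl).

(* Main.v *)
Require Import Defs.
From HB Require Import structures.
From mathcomp Require Import all_boot zify.
From Stdlib Require Import ClassicalEpsilon ProofIrrelevance Classical.

Set Implicit Arguments.
Unset Strict Implicit.
Unset Printing Implicit Defensive.


Lemma inj_surj_bij (A B : Type) (f : A -> B) :
  injective f -> (forall y, exists x, f x = y) -> bijective f.
Proof.
move=> fi fs.
pose g y := proj1_sig (constructive_indefinite_description _ (fs y)).
have gK : forall y, f (g y) = y.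
  by move=> y; rewrite /g; case: constructive_indefinite_description.
by exists g => [x|y]; [apply: fi; rewrite gK|rewrite gK].
Qed.

Lemma iso_sym (G H : graph) : graph_iso G H -> graph_iso H G.
Proof.
case=> f0 [f1 [[g0 a0 b0] [g1 a1 b1] hr hs]].
exists g0, g1; split.
- by exists f0.
- by exists f1.
- by move=> e; apply: (can_inj a0); rewrite -hr b0 b1.
- by move=> e; apply: (can_inj a0); rewrite -hs b0 b1.
Qed.

Lemma iso_trans (G H K : graph) : graph_iso G H -> graph_iso H K -> graph_iso G K.
Proof.
case=> f0 [f1 [bf0 bf1 hr hs]]; case=> g0 [g1 [bg0 bg1 hr' hs']].
exists (g0 \o f0), (g1 \o f1); split.
- exact: bij_comp.
- exact: bij_comp.
- by move=> e /=; rewrite hr' hr.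
- by move=> e /=; rewrite hs' hs.
Qed.

Lemma iso_refl (G : graph) : graph_iso G G.
Proof. by exists id, id; split => //; exists id. Qed.


Definition UE (G : graph) := (gE G + gE G * gE G)%type.
Definition prj (G : graph) (t : UE G) : gE G :=
  match t with inl e => e | inr p => p.1 end.

Record CRep (G : graph) (v : gV G) (K : graph) (dv : gV K -> gV G)
  (de : gE K -> UE G) : Prop := {
  cr_vinj : injective dv;
  cr_vne : forall x, dv x != v;
  cr_vsurj : forall w, w != v -> exists x, dv x = w;
  cr_einj : injective de;
  cr_egood : forall x,
    (exists e, de x = inl e /\ sg e != v /\ rg e != v /\ dv (rg x) = rg e /\ dv (sg x) = sg e)
    \/ (exists e f, de x = inr (e, f) /\ rg e = v /\ sg f = v /\ dv (rg x) = rg f /\ dv (sg x) = sg e);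
  cr_esurj1 : forall e, sg e != v -> rg e != v -> exists x, de x = inl e;
  cr_esurj2 : forall e f, rg e = v -> sg f = v -> exists x, de x = inr (e, f) }.

Definition cdenG (G : graph) (v : gV G) (y : collapse_E v) : UE G :=
  match y with inl e => inl (sval e) | inr p => inr (sval p) end.

Lemma cdenG_inj (G : graph) (v : gV G) : injective (@cdenG G v).
Proof.
case=> [[e he]|[p hp]] [[e' he']|[p' hp']] //= [] E; subst;
  by congr (_ _); apply: eq_exist_uncurried; exists erefl; apply: proof_irrelevance.
Qed.

Lemma crep_iso (G : graph) (v : gV G) (hl : ~ supports_loop v) (K : graph) dv de :
  @CRep G v K dv de -> graph_iso K (collapse_graph hl).
Proof.
move=> C.
have ex : forall x, exists y : collapse_E v, cdenG y = de x.
  move=> x; case: (cr_egood C x) => [[e [E [h1 [h2 _]]]]|[e [f [E [h1 [h2 _]]]]]].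
  - by exists (inl (exist _ e (conj h1 h2))).
  - by exists (inr (exist (fun p : gE G * gE G => rg p.1 = v /\ sg p.2 = v) (e, f) (conj h1 h2))).
pose f1 x := proj1_sig (constructive_indefinite_description _ (ex x)).
have f1E : forall x, cdenG (f1 x) = de x.
  by move=> x; rewrite /f1; case: constructive_indefinite_description.
pose f0 x := exist (fun w => w != v) (dv x) (cr_vne C x).
exists f0, f1; split.
- apply: inj_surj_bij.
    by move=> x y [] /(cr_vinj C).
  case=> w hw; case: (cr_vsurj C hw) => x hx; exists x; apply: val_inj => /=; exact: hx.
- apply: inj_surj_bij.
    by move=> x y E; apply: (cr_einj C); rewrite -!f1E E.
  move=> y; case hy: y => [[e [h1 h2]]|[[e f] [h1 h2]]].
  + case: (cr_esurj1 C h1 h2) => x hx; exists x; apply: cdenG_inj; by rewrite f1E hx.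
  + case: (cr_esurj2 C h1 h2) => x hx; exists x; apply: cdenG_inj; by rewrite f1E hx.
- move=> x; apply: val_inj => /=; have := f1E x.
  case: (cr_egood C x) => [[e [-> [_ [_ [hr _]]]]]|[e [f [-> [_ [_ [hr _]]]]]]];
  case: (f1 x) => [[e' he']|[p hp]] //= [] ->; by rewrite hr.
- move=> x; apply: val_inj => /=; have := f1E x.
  case: (cr_egood C x) => [[e [-> [_ [_ [_ hs]]]]]|[e [f [-> [_ [_ [_ hs]]]]]]];
  case: (f1 x) => [[e' he']|[p hp]] //= [] ->; by rewrite hs.
Qed.


Record PRep (G : graph) (v : gV G) (K : graph) (u : gV K) (dv : gV K -> gV G)
  (de : gE K -> UE G) (P : gE G -> gE G -> Prop) : Prop := {
  pr_vinj : injective dv;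
  pr_vu : dv u = v;
  pr_vsurj : forall w, exists x, dv x = w;
  pr_einj : injective de;
  pr_egood : forall x,
    (exists e, de x = inl e /\ dv (rg x) = rg e /\ dv (sg x) = sg e)
    \/ (exists e f, de x = inr (e, f) /\ P e f /\ rg e = v /\ sg f = v /\ dv (rg x) = rg f /\ dv (sg x) = sg e);
  pr_esurj1 : forall e, sg e != v -> rg e != v -> exists x, de x = inl e;
  pr_esurj2 : forall e f, rg e = v -> sg f = v -> P e f -> exists x, de x = inr (e, f);
  pr_esurj3 : forall e f, rg e = v -> sg f = v -> ~ P e f ->
      (exists a, de a = inl e) /\ (exists b, de b = inl f);
  pr_disj : forall e f, rg e = v -> sg f = v -> P e f ->
      (forall a, de a <> inl e) \/ (forall b, de b <> inl f) }.

Definition cdenK (G K : graph) (u : gV K) (de : gE K -> UE G) (y : collapse_E u) : UE G :=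
  match y with
  | inl e => de (sval e)
  | inr p => inr (prj (de (sval p).1), prj (de (sval p).2))
  end.

Lemma prep_in (G : graph) (v : gV G) (hl : ~ supports_loop v) K u dv de P :
  @PRep G v K u dv de P -> forall x, rg x = u ->
  exists e, de x = inl e /\ rg e = v /\ dv (sg x) = sg e.
Proof.
move=> C x hx; case: (pr_egood C x) => [[e [E [hr hs]]]|[e [f [E [_ [h1 [h2 [hr _]]]]]]]].
- by exists e; rewrite -hr hx (pr_vu C).
- exfalso; apply: hl; exists f; split => //; by rewrite -hr hx (pr_vu C).
Qed.

Lemma prep_out (G : graph) (v : gV G) (hl : ~ supports_loop v) K u dv de P :
  @PRep G v K u dv de P -> forall x, sg x = u ->
  exists f, de x = inl f /\ sg f = v /\ dv (rg x) = rg f.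
Proof.
move=> C x hx; case: (pr_egood C x) => [[e [E [hr hs]]]|[e [f [E [_ [h1 [h2 [_ hs]]]]]]]].
- by exists e; rewrite -hs hx (pr_vu C).
- exfalso; apply: hl; exists e; split => //; by rewrite -hs hx (pr_vu C).
Qed.

Lemma prep_noloop (G : graph) (v : gV G) (hl : ~ supports_loop v) K u dv de P :
  @PRep G v K u dv de P -> ~ supports_loop u.
Proof.
move=> C [x [hs hr]]; case: (prep_in hl C hr) => e [E [h1 h2]].
case: (prep_out hl C hs) => f [E' [h3 h4]].
move: E; rewrite E' => -[?]; subst e; apply: hl; exists f; split => //.
Qed.

Lemma prep_collapse (G : graph) (v : gV G) (hl : ~ supports_loop v) K u dv de P
  (hlK : ~ supports_loop u) :
  @PRep G v K u dv de P ->
  @CRep G v (collapse_graph hlK) (fun x => dv (sval x)) (@cdenK G K u de).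
Proof.
move=> C.
have nlr : forall f, sg f = v -> rg f != v.
  by move=> f hf; apply/eqP => hr; apply: hl; exists f.
have nls : forall e, rg e = v -> sg e != v.
  by move=> e he; apply/eqP => hs; apply: hl; exists e.
have dvu : forall x, dv x = v -> x = u.
  by move=> x hx; apply: (pr_vinj C); rewrite hx (pr_vu C).
have pairE : forall p : {p : gE K * gE K | rg p.1 = u /\ sg p.2 = u},
  exists e f, de (sval p).1 = inl e /\ de (sval p).2 = inl f /\ rg e = v /\ sg f = v
    /\ dv (sg (sval p).1) = sg e /\ dv (rg (sval p).2) = rg f.
  case=> [[a b] [ha hb]] /=.
  case: (prep_in hl C ha) => e [Ea [h1 h2]]; case: (prep_out hl C hb) => f [Eb [h3 h4]].
  by exists e, f.
split.
- by move=> x y /(pr_vinj C) /val_inj.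
- by case=> x hx /=; apply/eqP => /dvu E; move: hx; rewrite E eqxx.
- move=> w hw; case: (pr_vsurj C w) => x hx.
  have hxu : x != u by apply/eqP => E; move: hw; rewrite -hx E (pr_vu C) eqxx.
  by exists (exist _ x hxu).
- case=> [[y hy]|p] [[y' hy']|p'] /=.
  + move=> /(pr_einj C) E; subst; congr inl; apply: eq_exist_uncurried; exists erefl;
      apply: proof_irrelevance.
  + case: (pairE p') => e [f [E1 [E2 [h1 [h2 _]]]]]; rewrite E1 E2 /= => E.
    case: (pr_egood C y) => [[e' [E' _]]|[e' [f' [E' [hP _]]]]]; first by rewrite E' in E.
    move: E; rewrite E' => -[? ?]; subst e' f'.
    case: (pr_disj C h1 h2 hP) => H; [by case: (H _ E1)|by case: (H _ E2)].
  + case: (pairE p) => e [f [E1 [E2 [h1 [h2 _]]]]]; rewrite E1 E2 /= => E.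
    case: (pr_egood C y') => [[e' [E' _]]|[e' [f' [E' [hP _]]]]]; first by rewrite E' in E.
    move: E; rewrite E' => -[? ?]; subst e' f'.
    case: (pr_disj C h1 h2 hP) => H; [by case: (H _ E1)|by case: (H _ E2)].
  + case: (pairE p) => e [f [E1 [E2 _]]]; case: (pairE p') => e' [f' [E1' [E2' _]]].
    rewrite E1 E2 E1' E2' /= => -[? ?]; subst e' f'.
    move: E1 E2 E1' E2'; case: p => [[a b] hab]; case: p' => [[a' b'] hab'] /=.
    move=> E1 E2 E1' E2'.
    have ? : a = a' by apply: (pr_einj C); rewrite E1 E1'.
    have ? : b = b' by apply: (pr_einj C); rewrite E2 E2'.
    subst; congr inr; apply: eq_exist_uncurried; exists erefl; apply: proof_irrelevance.
- case=> [[y [hys hyr]]|p] /=.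
  + case: (pr_egood C y) => [[e [E [hr hs]]]|[e [f [E [_ [h1 [h2 [hr hs]]]]]]]].
    * left; exists e; rewrite E hr hs; split => //; split; [|split] => //.
      - by apply/eqP; rewrite -hs => /dvu /eqP; rewrite (negbTE hys).
      - by apply/eqP; rewrite -hr => /dvu /eqP; rewrite (negbTE hyr).
    * by right; exists e, f; rewrite E hr hs.
  + case: (pairE p) => e [f [E1 [E2 [h1 [h2 [h3 h4]]]]]]; right; exists e, f.
    by rewrite E1 E2 /= h3 h4.
- move=> e h1 h2; case: (pr_esurj1 C h1 h2) => x E.
  case: (pr_egood C x) => [[e' [E' [hr hs]]]|[e' [f' [E' _]]]]; last by rewrite E' in E.
  move: E; rewrite E' => -[?]; subst e'.
  have hxs : sg x != u by apply/eqP => hx; move: h1; rewrite -hs hx (pr_vu C) eqxx.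
  have hxr : rg x != u by apply/eqP => hx; move: h2; rewrite -hr hx (pr_vu C) eqxx.
  by exists (inl (exist _ x (conj hxs hxr))); rewrite /= E'.
- move=> e f h1 h2; case: (classic (P e f)) => hP.
  + case: (pr_esurj2 C h1 h2 hP) => x E.
    case: (pr_egood C x) => [[e' [E' _]]|[e' [f' [E' [_ [_ [_ [hr hs]]]]]]]]; first by rewrite E' in E.
    move: E; rewrite E' => -[? ?]; subst e' f'.
    have hxs : sg x != u by apply/eqP => hx; move: (nls e h1); rewrite -hs hx (pr_vu C) eqxx.
    have hxr : rg x != u by apply/eqP => hx; move: (nlr f h2); rewrite -hr hx (pr_vu C) eqxx.
    by exists (inl (exist _ x (conj hxs hxr))); rewrite /= E'.
  + case: (pr_esurj3 C h1 h2 hP) => [[a Ea] [b Eb]].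
    have ha : rg a = u.
      case: (pr_egood C a) => [[e' [E' [hr _]]]|[e' [f' [E' _]]]]; last by rewrite E' in Ea.
      by move: Ea; rewrite E' => -[?]; subst e'; apply: dvu; rewrite hr.
    have hb : sg b = u.
      case: (pr_egood C b) => [[e' [E' [_ hs]]]|[e' [f' [E' _]]]]; last by rewrite E' in Eb.
      by move: Eb; rewrite E' => -[?]; subst e'; apply: dvu; rewrite hs.
    exists (inr (exist (fun p : gE K * gE K => rg p.1 = u /\ sg p.2 = u) (a, b) (conj ha hb))).
    by rewrite /= Ea Eb.
Qed.


Lemma sig_eqP (A : Type) (P : A -> Prop) (x y : sig P) : sval x = sval y -> x = y.
Proof.
case: x => x hx; case: y => y hy /= E; subst.
by congr exist; apply: proof_irrelevance.
Qed.

Lemma del_crep (G : graph) (v : gV G) : is_source v ->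
  @CRep G v (del_graph v) (fun x => sval x) (fun x => inl (sval x)).
Proof.
move=> hsrc; split.
- exact: val_inj.
- by case.
- by move=> w hw; exists (exist _ w hw).
- by move=> x y [] /sig_eqP.
- by case=> e [h1 h2] /=; left; exists e.
- by move=> e h1 h2; exists (exist _ e (conj h1 h2)).
- by move=> e f he; case: (hsrc e).
Qed.

Definition red_de (G : graph) (u : gV G) (f : gE G) (e : reduce_E u) : UE G :=
  match e with inl e' => inl (sval e') | inr e' => inr (sval e', f) end.

Lemma red_crep (G : graph) (u : gV G) (f : gE G) (hsf : sg f = u)
    (hf : forall e : gE G, sg e = u -> e = f) (hrf : rg f != u) :
  @CRep G u (reduce_graph hf hrf) (fun x => sval x) (@red_de G u f).
Proof.
split.
- exact: val_inj.
- by case.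
- by move=> w hw; exists (exist _ w hw).
- case=> [[e he]|[e he]] [[e' he']|[e' he']] //= [] E; subst;
  by congr (_ _); apply: eq_exist_uncurried; exists erefl; apply: proof_irrelevance.
- case=> [[e [h1 h2]]|[e he]] /=; [left; by exists e|right; by exists e, f].
- by move=> e h1 h2; exists (inl (exist _ e (conj h1 h2))).
- by move=> e f' he hf'; rewrite (hf _ hf'); exists (inr (exist _ e he)).
Qed.

Definition outb (G : graph) (Q : gE G -> Prop) (a : nat) : Prop :=
  exists g : gE G -> nat, (forall e, Q e -> g e < a) /\
    (forall e e', Q e -> Q e' -> g e = g e' -> e = e').

Definition srcb (G : graph) (Q : gE G -> Prop) (b : nat) : Prop :=
  exists h : gV G -> nat, (forall e, Q e -> h (sg e) < b) /\
    (forall e e', Q e -> Q e' -> h (sg e) = h (sg e') -> sg e = sg e').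

Lemma outb_tr (G K : graph) (Q : gE G -> Prop) (Pk : gE K -> Prop) a (d : gE K -> gE G) :
  outb Q a -> (forall x, Pk x -> Q (d x)) ->
  (forall x x', Pk x -> Pk x' -> d x = d x' -> x = x') -> outb Pk a.
Proof.
case=> g [h1 h2] hQ hi; exists (fun x => g (d x)); split.
  by move=> x hx; apply: h1; apply: hQ.
by move=> x x' hx hx' E; apply: hi => //; apply: h2 => //; apply: hQ.
Qed.

Lemma srcb_tr (G K : graph) (Q : gE G -> Prop) (Pk : gE K -> Prop) b (d : gE K -> gE G)
  (dv : gV K -> gV G) :
  srcb Q b -> (forall x, Pk x -> Q (d x) /\ dv (sg x) = sg (d x)) ->
  (forall x x', Pk x -> Pk x' -> dv (sg x) = dv (sg x') -> sg x = sg x') -> srcb Pk b.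
Proof.
case=> h [h1 h2] hQ hi; exists (fun w => h (dv w)); split.
  by move=> x hx; case: (hQ x hx) => q ->; apply: h1.
move=> x x' hx hx' E; apply: hi => //.
case: (hQ x hx) => q ->; case: (hQ x' hx') => q' ->.
by apply: h2 => //; case: (hQ x hx) => _ <-; case: (hQ x' hx') => _ <-.
Qed.

Lemma outb_rem (G : graph) (Q : gE G -> Prop) a f1 :
  outb Q a -> Q f1 -> outb (fun e => Q e /\ e <> f1) a.-1.
Proof.
case=> g [h1 h2] hf; exists (fun e => if g e < g f1 then g e else (g e).-1); split.
  move=> e [he hne]; have := h1 _ he; have := h1 _ hf.
  have : g e <> g f1 by move=> E; apply: hne; apply: h2.
  case: ifP => ?; rewrite -?subn1; lia.
move=> e e' [he hne] [he' hne'].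
have : g e <> g f1 by move=> E; apply: hne; apply: h2.
have : g e' <> g f1 by move=> E; apply: hne'; apply: h2.
move=> n1 n2 E; apply: h2 => //; move: E; do 2 case: ifP => ?; rewrite -?subn1; lia.
Qed.

Lemma srcb_rem (G : graph) (Q : gE G -> Prop) b e1 :
  srcb Q b -> Q e1 -> srcb (fun e => Q e /\ sg e <> sg e1) b.-1.
Proof.
case=> g [h1 h2] hf; exists (fun w => if g w < g (sg e1) then g w else (g w).-1); split.
  move=> e [he hne]; have := h1 _ he; have := h1 _ hf.
  have : g (sg e) <> g (sg e1) by move=> E; apply: hne; apply: h2.
  case: ifP => ?; rewrite -?subn1; lia.
move=> e e' [he hne] [he' hne'].
have : g (sg e) <> g (sg e1) by move=> E; apply: hne; apply: h2.
have : g (sg e') <> g (sg e1) by move=> E; apply: hne'; apply: h2.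
move=> n1 n2 E; apply: h2 => //; move: E; do 2 case: ifP => ?; rewrite -?subn1; lia.
Qed.

Lemma outb_finite (G : graph) (Q : gE G -> Prop) a e0 :
  Q e0 -> outb Q a -> finite_set Q.
Proof.
move=> h0 [g [h1 h2]].
pose c (i : 'I_a) := epsilon (inhabits e0) (fun e => Q e /\ g e = i).
exists a, c => e he; exists (Ordinal (h1 _ he)); rewrite /c.
move: (epsilon_spec (inhabits e0) (fun e' => Q e' /\ g e' = g e)
  (ex_intro _ e (conj he erefl))) => [hq hg].
exact: h2 hq he hg.
Qed.

Lemma regular_of (G : graph) (v : gV G) a e0 :
  sg e0 = v -> outb (fun e => sg e = v) a -> is_regular v.
Proof.
rewrite /is_regular /is_singular => h0 hb [hs|hi]; first exact: (hs e0).
by apply: hi; apply: (outb_finite h0 hb).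
Qed.


Definition dvs (G : graph) (v : gV G) (n : nat) (x : split_V v n) : gV G :=
  match x with inl d => sval d | inr _ => v end.

Lemma dvs_inj_ne (G : graph) (v : gV G) n (x y : split_V v n) :
  dvs x = dvs y -> dvs x != v -> x = y.
Proof.
case: x => [[x hx]|i]; case: y => [[y hy]|j] //= E /eqP ne //.
by congr inl; apply: val_inj.
Qed.

Lemma I2_ne0 (i : 'I_2) : i != ord0 -> i = ord_max.
Proof. by case: i => [[|[|m]] hm] //= _; apply: val_inj. Qed.

Lemma I2_cases (i : 'I_2) : i = ord0 \/ i = ord_max.
Proof. by case: (eqVneq i ord0) => [->|/I2_ne0 ->]; [left|right]. Qed.

Lemma I2_0max : (ord0 : 'I_2) != ord_max.
Proof. by []. Qed.

Definition und_o (G : graph) (v : gV G) n (x : out_E v n) : gE G :=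
  match x with inl e => sval e | inr (e, _) => sval e end.

Lemma out_src_v (G : graph) (v : gV G) n (part : gE G -> 'I_n) e :
  sg e = v -> out_src v part e = inr (part e).
Proof. by move=> he; rewrite /out_src insubF // he eqxx. Qed.

Lemma dvs_out_src (G : graph) (v : gV G) n (part : gE G -> 'I_n) e :
  dvs (out_src v part e) = sg e.
Proof. by rewrite /out_src; case: insubP => [x _ <-|] //= /negbNE /eqP ->. Qed.

Lemma out_src_inr (G : graph) (v : gV G) n (part : gE G -> 'I_n) e i :
  out_src v part e = inr i -> sg e = v /\ part e = i.
Proof. by rewrite /out_src; case: insubP => [x _ _|/negbNE /eqP he] //= [<-]. Qed.

Lemma out_s_und (G : graph) (v : gV G) n (part : gE G -> 'I_n) (x : out_E v n) :
  out_s part x = out_src v part (und_o x).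
Proof. by case: x => [e|[e i]]. Qed.

Lemma dvs_out_r (G : graph) (v : gV G) n (x : out_E v n) :
  dvs (out_r x) = rg (und_o x).
Proof. by case: x => [[e he]|[[e he] i]]. Qed.

Lemma dvs_out_s (G : graph) (v : gV G) n (part : gE G -> 'I_n) (x : out_E v n) :
  dvs (out_s part x) = sg (und_o x).
Proof. by rewrite out_s_und dvs_out_src. Qed.

Lemma out_r_inr (G : graph) (v : gV G) n (x : out_E v n) i :
  out_r x = inr i -> exists e (he : rg e = v), x = inr (exist _ e he, i).
Proof. by case: x => [[e he]|[[e he] j]] //= [<-]; exists e, he. Qed.

Lemma out_s_inr (G : graph) (v : gV G) (hl : ~ supports_loop v) n
  (part : gE G -> 'I_n) (x : out_E v n) i :
  out_s part x = inr i -> exists f (hf : rg f != v), x = inl (exist _ f hf).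
Proof.
case: x => [[f hf]|[[e he] j]] /=; first by exists f, hf.
by move/out_src_inr => [hs _]; case: hl; exists e.
Qed.

Lemma out_noloop (G : graph) (v : gV G) (hl : ~ supports_loop v) n
  (part : gE G -> 'I_n) i :
  ~ supports_loop (G := outsplit_graph v part) (inr i).
Proof.
case=> x [hs hr]; apply: hl; exists (und_o x); split.
- by rewrite -(dvs_out_s part x); have -> : out_s part x = inr i by [].
- by rewrite -(dvs_out_r x); have -> : out_r x = inr i by [].
Qed.


Definition o_H1 (G : graph) (v : gV G) (hl : ~ supports_loop v) (part : gE G -> 'I_2) :=
  collapse_graph (@out_noloop G v hl 2 part ord0).

Lemma o_u_prf (G : graph) (v : gV G) (part : gE G -> 'I_2) :
  (inr ord_max : gV (outsplit_graph v part)) != inr ord0.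
Proof. by []. Qed.

Definition o_u (G : graph) (v : gV G) (hl : ~ supports_loop v) (part : gE G -> 'I_2) :
  gV (o_H1 hl part) := exist _ (inr ord_max) (o_u_prf v part).

Definition o_dv (G : graph) (v : gV G) (hl : ~ supports_loop v) (part : gE G -> 'I_2)
  (x : gV (o_H1 hl part)) : gV G := dvs (sval x).

Definition o_de (G : graph) (v : gV G) (hl : ~ supports_loop v) (part : gE G -> 'I_2)
  (y : gE (o_H1 hl part)) : UE G :=
  match y with
  | inl x => inl (und_o (sval x))
  | inr p => inr (und_o (sval p).1, und_o (sval p).2)
  end.

Arguments o_H1 {G v} hl part.
Arguments o_u {G v} hl part.
Arguments o_dv {G v} hl part x.
Arguments o_de {G v} hl part y.

Lemma delV2_cases (G : graph) (v : gV G) (part : gE G -> 'I_2)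
  (x : delV (G := outsplit_graph v part) (inr ord0)) :
  (exists d, sval x = inl d) \/ sval x = inr ord_max.
Proof.
case: x => [[d|i] hi] /=; first by left; exists d.
by right; congr inr; apply: I2_ne0; apply: contra hi => /eqP ->.
Qed.

Definition mk_unt (K : graph) (u : gV K) (x : gE K) (h : sg x != u /\ rg x != u) :
  untouched u := exist _ x h.

Lemma o_prep (G : graph) (v : gV G) (hl : ~ supports_loop v) (part : gE G -> 'I_2) :
  @PRep G v (o_H1 hl part) (o_u hl part) (o_dv hl part) (o_de hl part)
    (fun e f => part f = ord0).
Proof.
have nlr : forall f, sg f = v -> rg f != v.
  by move=> f hf; apply/eqP => hr; apply: hl; exists f.
have nls : forall e, rg e = v -> sg e != v.
  by move=> e he; apply/eqP => hs; apply: hl; exists e.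
split.
- move=> x y; rewrite /o_dv => E.
  case: (delV2_cases x) => [[d hd]|hx]; case: (delV2_cases y) => [[d' hd']|hy].
  + apply: val_inj; apply: dvs_inj_ne; first exact: E.
    rewrite -[val x]/(sval x) hd; exact: (svalP d).
  + move: E; rewrite /= -[val x]/(sval x) -[val y]/(sval y) hd hy /= => E.
    by move/eqP: (svalP d) => H; case: (H E).
  + move: E; rewrite /= -[val x]/(sval x) -[val y]/(sval y) hd' hx /= => E.
    by move/eqP: (svalP d') => H; case: (H (esym E)).
  + by apply: val_inj; rewrite -[val x]/(sval x) -[val y]/(sval y) hx hy.
- by [].
- move=> w; case: (eqVneq w v) => [->|hw]; first by exists (o_u hl part).
  have hne : (inl (exist _ w hw) : gV (outsplit_graph v part)) != inr ord0 by [].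
  by exists (exist (fun z : gV (outsplit_graph v part) => z != inr ord0) _ hne).
- case=> [[x hx]|[[a b] [ha hb]]] [[x' hx']|[[a' b'] [ha' hb']]] //=.
  + move=> [] E; congr inl; apply: sig_eqP => /=.
    move: hx hx' E; case: x => [[e he]|[[e he] i]]; case: x' => [[e' he']|[[e' he'] i']] //=.
    * by move=> _ _ ?; subst e'; congr inl; apply: val_inj.
    * by move=> _ _ ?; subst e'; exfalso; move/eqP: he; apply.
    * by move=> _ _ ?; subst e'; exfalso; move/eqP: he'; apply.
    * move=> [_ hi] [_ hi'] ?; subst e'.
      have -> : i = ord_max by apply: I2_ne0; apply: contra hi => /eqP ->.
      have -> : i' = ord_max by apply: I2_ne0; apply: contra hi' => /eqP ->.
      by congr inr; congr pair; apply: sig_eqP.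
  + move=> [] Ea Eb; congr inr; apply: sig_eqP => /=.
    case: (out_r_inr ha) => e [he Ha]; case: (out_r_inr ha') => e' [he' Ha'].
    case: (out_s_inr hl hb) => f [hf Hb]; case: (out_s_inr hl hb') => f' [hf' Hb'].
    move: Ha Ha' Hb Hb' => /= Ha Ha' Hb Hb'.
    subst a a' b b'; move: Ea Eb => /= ? ?; subst e' f'.
    by congr pair; [congr inr; congr pair|congr inl]; apply: sig_eqP.
- case=> [[x [hxs hxr]]|[[a b] [ha hb]]] /=.
  + left; exists (und_o x); split => //; split.
    * exact: dvs_out_r.
    * exact: dvs_out_s.
  + right; exists (und_o a), (und_o b).
    have hb' : out_src v part (und_o b) = inr ord0 by rewrite -out_s_und.
    case: (out_src_inr hb') => hsb hpb.
    have hra : rg (und_o a) = v by rewrite -dvs_out_r; have -> : out_r a = inr ord0 by [].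
    do 5 (split => //).
    * exact: dvs_out_r.
    * exact: dvs_out_s.
- move=> e h1 h2.
  have hs : out_s part (inl (exist _ e h2) : out_E v 2) != inr ord0.
    by apply/eqP => /out_src_inr [he _]; move: h1; rewrite he eqxx.
  have hr : out_r (inl (exist _ e h2) : out_E v 2) != inr ord0 by [].
  by exists (inl (@mk_unt (outsplit_graph v part) (inr ord0) _ (conj hs hr))).
- move=> e f he hf hp.
  have ha : out_r (inr (exist _ e he, ord0) : out_E v 2) = inr ord0 by [].
  have hb : out_s part (inl (exist _ f (nlr f hf)) : out_E v 2) = inr ord0.
    by rewrite /= out_src_v // hp.
  by exists (inr (exist (fun p : out_E v 2 * out_E v 2 =>
    out_r p.1 = inr ord0 /\ out_s part p.2 = inr ord0) (_, _) (conj ha hb))).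
- move=> e f he hf hp.
  have hpm : part f = ord_max by apply: I2_ne0; apply/eqP.
  split.
  + have hs : out_s part (inr (exist _ e he, ord_max) : out_E v 2) != inr ord0.
      by apply/eqP => /out_src_inr [he' _]; move: (nls e he); rewrite he' eqxx.
    have hr : out_r (inr (exist _ e he, ord_max) : out_E v 2) != inr ord0 by [].
    by exists (inl (@mk_unt (outsplit_graph v part) (inr ord0) _ (conj hs hr))).
  + have hs : out_s part (inl (exist _ f (nlr f hf)) : out_E v 2) != inr ord0.
      by rewrite /= out_src_v // hpm.
    have hr : out_r (inl (exist _ f (nlr f hf)) : out_E v 2) != inr ord0 by [].
    by exists (inl (@mk_unt (outsplit_graph v part) (inr ord0) _ (conj hs hr))).
- move=> e f he hf hp; right.
  case=> [[x [hxs hxr]]|p] //= [] E.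
  move: hxs hxr E; case: x => [[f' hf']|[[f' hf'] i]] /= hxs hxr E; subst f'.
  + by move: hxs; rewrite out_src_v // hp eqxx.
  + by move: (nlr f hf); rewrite hf' eqxx.
Qed.

Lemma prep_sg_u (G : graph) (v : gV G) K u dv de P :
  @PRep G v K u dv de P -> forall x f, de x = inl f -> sg f = v -> sg x = u.
Proof.
move=> C x f E hf; case: (pr_egood C x) => [[e [E' [_ hs]]]|[e [f' [E' _]]]]; last by rewrite E' in E.
move: E; rewrite E' => -[?]; subst e; apply: (pr_vinj C); by rewrite hs hf (pr_vu C).
Qed.

Lemma prep_rg_u (G : graph) (v : gV G) K u dv de P :
  @PRep G v K u dv de P -> forall x e, de x = inl e -> rg e = v -> rg x = u.
Proof.
move=> C x f E hf; case: (pr_egood C x) => [[e [E' [hr _]]]|[e [f' [E' _]]]]; last by rewrite E' in E.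
move: E; rewrite E' => -[?]; subst e; apply: (pr_vinj C); by rewrite hr hf (pr_vu C).
Qed.

Lemma o_v1_out (G : graph) (v : gV G) (part : gE G -> 'I_2) (x : out_E v 2) :
  out_s part x = inr ord0 -> sg (und_o x) = v /\ part (und_o x) = ord0.
Proof. by rewrite out_s_und => /out_src_inr. Qed.

Lemma o_v1_out_inj (G : graph) (v : gV G) (hl : ~ supports_loop v) (part : gE G -> 'I_2)
  (x x' : out_E v 2) :
  out_s part x = inr ord0 -> out_s part x' = inr ord0 -> und_o x = und_o x' -> x = x'.
Proof.
move=> /(out_s_inr hl) [f [hf ->]] /(out_s_inr hl) [f' [hf' ->]] /= E; subst f'.
by congr inl; apply: val_inj.
Qed.

Lemma o_v1_in (G : graph) (v : gV G) (part : gE G -> 'I_2) (x : out_E v 2) :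
  out_r x = inr ord0 -> rg (und_o x) = v /\ dvs (out_s part x) = sg (und_o x).
Proof.
move=> h; split; last exact: dvs_out_s.
by rewrite -dvs_out_r h.
Qed.

Lemma o_v1_in_inj (G : graph) (v : gV G) (hl : ~ supports_loop v) (part : gE G -> 'I_2)
  (x x' : out_E v 2) :
  out_r x = inr ord0 -> out_r x' = inr ord0 ->
  dvs (out_s part x) = dvs (out_s part x') -> out_s part x = out_s part x'.
Proof.
move=> h _ E; apply: dvs_inj_ne => //.
case: (o_v1_in part h) => hr ->; apply/eqP => hs; apply: hl; exists (und_o x); done.
Qed.

Lemma o_u_out (G : graph) (v : gV G) (hl : ~ supports_loop v) (part : gE G -> 'I_2)
  (y : gE (o_H1 hl part)) :
  sg y = o_u hl part -> exists f, o_de hl part y = inl f /\ sg f = v /\ part f = ord_max.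
Proof.
case: y => [[x hx]|[[a b] [ha hb]]] /= E.
- exists (und_o x); move: E => /(congr1 sval) /= E.
  have : out_src v part (und_o x) = inr ord_max by rewrite -out_s_und.
  by move/out_src_inr.
- exfalso; move: E => /(congr1 sval) /= E.
  have : out_src v part (und_o a) = inr ord_max by rewrite -out_s_und.
  move/out_src_inr => [hs _]; apply: hl; exists (und_o a); split => //.
  by rewrite -dvs_out_r; have -> : out_r a = inr ord0 by [].
Qed.


Definition und_i (G : graph) (v : gV G) n (x : in_E v n) : gE G :=
  match x with inl e => sval e | inr (e, _) => sval e end.

Lemma in_tgt_v (G : graph) (v : gV G) n (part : gE G -> 'I_n) e :
  rg e = v -> in_tgt v part e = inr (part e).
Proof. by move=> he; rewrite /in_tgt insubF // he eqxx. Qed.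

Lemma dvs_in_tgt (G : graph) (v : gV G) n (part : gE G -> 'I_n) e :
  dvs (in_tgt v part e) = rg e.
Proof. by rewrite /in_tgt; case: insubP => [x _ <-|] //= /negbNE /eqP ->. Qed.

Lemma in_tgt_inr (G : graph) (v : gV G) n (part : gE G -> 'I_n) e i :
  in_tgt v part e = inr i -> rg e = v /\ part e = i.
Proof. by rewrite /in_tgt; case: insubP => [x _ _|/negbNE /eqP he] //= [<-]. Qed.

Lemma in_r_und (G : graph) (v : gV G) n (part : gE G -> 'I_n) (x : in_E v n) :
  in_r part x = in_tgt v part (und_i x).
Proof. by case: x => [e|[e i]]. Qed.

Lemma dvs_in_s (G : graph) (v : gV G) n (x : in_E v n) :
  dvs (in_s x) = sg (und_i x).
Proof. by case: x => [[e he]|[[e he] i]]. Qed.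

Lemma dvs_in_r (G : graph) (v : gV G) n (part : gE G -> 'I_n) (x : in_E v n) :
  dvs (in_r part x) = rg (und_i x).
Proof. by rewrite in_r_und dvs_in_tgt. Qed.

Lemma in_s_inr (G : graph) (v : gV G) n (x : in_E v n) i :
  in_s x = inr i -> exists f (hf : sg f = v), x = inr (exist _ f hf, i).
Proof. by case: x => [[e he]|[[e he] j]] //= [<-]; exists e, he. Qed.

Lemma in_r_inr (G : graph) (v : gV G) (hl : ~ supports_loop v) n
  (part : gE G -> 'I_n) (x : in_E v n) i :
  in_r part x = inr i -> exists e (he : sg e != v), x = inl (exist _ e he).
Proof.
case: x => [[e he]|[[e he] j]] /=; first by exists e, he.
by move/in_tgt_inr => [hr _]; case: hl; exists e.
Qed.

Lemma in_noloop (G : graph) (v : gV G) (hl : ~ supports_loop v) n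
  (part : gE G -> 'I_n) i :
  ~ supports_loop (G := insplit_graph v part) (inr i).
Proof.
case=> x [hs hr]; apply: hl; exists (und_i x); split.
- by rewrite -(dvs_in_s x); have -> : in_s x = inr i by [].
- by rewrite -(dvs_in_r part x); have -> : in_r part x = inr i by [].
Qed.

Definition i_H1 (G : graph) (v : gV G) (hl : ~ supports_loop v) (part : gE G -> 'I_2) :=
  collapse_graph (@in_noloop G v hl 2 part ord0).

Definition i_u (G : graph) (v : gV G) (hl : ~ supports_loop v) (part : gE G -> 'I_2) :
  gV (i_H1 hl part) := exist _ (inr ord_max) (o_u_prf v part).

Definition i_dv (G : graph) (v : gV G) (hl : ~ supports_loop v) (part : gE G -> 'I_2)
  (x : gV (i_H1 hl part)) : gV G := dvs (sval x).

Definition i_de (G : graph) (v : gV G) (hl : ~ supports_loop v) (part : gE G -> 'I_2)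
  (y : gE (i_H1 hl part)) : UE G :=
  match y with
  | inl x => inl (und_i (sval x))
  | inr p => inr (und_i (sval p).1, und_i (sval p).2)
  end.

Arguments i_H1 {G v} hl part.
Arguments i_u {G v} hl part.
Arguments i_dv {G v} hl part x.
Arguments i_de {G v} hl part y.

Lemma delV2i_cases (G : graph) (v : gV G) (part : gE G -> 'I_2)
  (x : delV (G := insplit_graph v part) (inr ord0)) :
  (exists d, sval x = inl d) \/ sval x = inr ord_max.
Proof.
case: x => [[d|i] hi] /=; first by left; exists d.
by right; congr inr; apply: I2_ne0; apply: contra hi => /eqP ->.
Qed.

Lemma i_prep (G : graph) (v : gV G) (hl : ~ supports_loop v) (part : gE G -> 'I_2) :
  @PRep G v (i_H1 hl part) (i_u hl part) (i_dv hl part) (i_de hl part)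
    (fun e f => part e = ord0).
Proof.
have nlr : forall f, sg f = v -> rg f != v.
  by move=> f hf; apply/eqP => hr; apply: hl; exists f.
have nls : forall e, rg e = v -> sg e != v.
  by move=> e he; apply/eqP => hs; apply: hl; exists e.
split.
- move=> x y; rewrite /i_dv => E.
  case: (delV2i_cases x) => [[d hd]|hx]; case: (delV2i_cases y) => [[d' hd']|hy].
  + apply: val_inj; apply: dvs_inj_ne; first exact: E.
    rewrite -[val x]/(sval x) hd; exact: (svalP d).
  + move: E; rewrite /= -[val x]/(sval x) -[val y]/(sval y) hd hy /= => E.
    by move/eqP: (svalP d) => H; case: (H E).
  + move: E; rewrite /= -[val x]/(sval x) -[val y]/(sval y) hd' hx /= => E.
    by move/eqP: (svalP d') => H; case: (H (esym E)).
  + by apply: val_inj; rewrite -[val x]/(sval x) -[val y]/(sval y) hx hy.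
- by [].
- move=> w; case: (eqVneq w v) => [->|hw]; first by exists (i_u hl part).
  have hne : (inl (exist _ w hw) : gV (insplit_graph v part)) != inr ord0 by [].
  by exists (exist (fun z : gV (insplit_graph v part) => z != inr ord0) _ hne).
- case=> [[x hx]|[[a b] [ha hb]]] [[x' hx']|[[a' b'] [ha' hb']]] //=.
  + move=> [] E; congr inl; apply: sig_eqP => /=.
    move: hx hx' E; case: x => [[e he]|[[e he] i]]; case: x' => [[e' he']|[[e' he'] i']] //=.
    * by move=> _ _ ?; subst e'; congr inl; apply: val_inj.
    * by move=> _ _ ?; subst e'; exfalso; move/eqP: he; apply.
    * by move=> _ _ ?; subst e'; exfalso; move/eqP: he'; apply.
    * move=> [hi _] [hi' _] ?; subst e'.
      have -> : i = ord_max by apply: I2_ne0; apply: contra hi => /eqP ->.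
      have -> : i' = ord_max by apply: I2_ne0; apply: contra hi' => /eqP ->.
      by congr inr; congr pair; apply: sig_eqP.
  + move=> [] Ea Eb; congr inr; apply: sig_eqP => /=.
    case: (in_r_inr hl ha) => e [he Ha]; case: (in_r_inr hl ha') => e' [he' Ha'].
    case: (in_s_inr hb) => f [hf Hb]; case: (in_s_inr hb') => f' [hf' Hb'].
    move: Ha Ha' Hb Hb' => /= Ha Ha' Hb Hb'.
    subst a a' b b'; move: Ea Eb => /= ? ?; subst e' f'.
    by congr pair; [congr inl|congr inr; congr pair]; apply: sig_eqP.
- case=> [[x [hxs hxr]]|[[a b] [ha hb]]] /=.
  + left; exists (und_i x); split => //; split.
    * exact: dvs_in_r.
    * exact: dvs_in_s.
  + right; exists (und_i a), (und_i b).
    have ha' : in_tgt v part (und_i a) = inr ord0 by rewrite -in_r_und.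
    case: (in_tgt_inr ha') => hra hpa.
    have hsb : sg (und_i b) = v by rewrite -dvs_in_s; have -> : in_s b = inr ord0 by [].
    do 5 (split => //).
    * exact: dvs_in_r.
    * exact: dvs_in_s.
- move=> e h1 h2.
  have hs : in_s (inl (exist _ e h1) : in_E v 2) != inr ord0 by [].
  have hr : in_r part (inl (exist _ e h1) : in_E v 2) != inr ord0.
    by apply/eqP => /in_tgt_inr [he _]; move: h2; rewrite he eqxx.
  by exists (inl (@mk_unt (insplit_graph v part) (inr ord0) _ (conj hs hr))).
- move=> e f he hf hp.
  have ha : in_r part (inl (exist _ e (nls e he)) : in_E v 2) = inr ord0.
    by rewrite /= in_tgt_v // hp.
  have hb : in_s (inr (exist _ f hf, ord0) : in_E v 2) = inr ord0 by [].
  by exists (inr (exist (fun p : in_E v 2 * in_E v 2 =>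
    in_r part p.1 = inr ord0 /\ in_s p.2 = inr ord0) (_, _) (conj ha hb))).
- move=> e f he hf hp.
  have hpm : part e = ord_max by apply: I2_ne0; apply/eqP.
  split.
  + have hs : in_s (inl (exist _ e (nls e he)) : in_E v 2) != inr ord0 by [].
    have hr : in_r part (inl (exist _ e (nls e he)) : in_E v 2) != inr ord0.
      by rewrite /= in_tgt_v // hpm.
    by exists (inl (@mk_unt (insplit_graph v part) (inr ord0) _ (conj hs hr))).
  + have hs : in_s (inr (exist _ f hf, ord_max) : in_E v 2) != inr ord0 by [].
    have hr : in_r part (inr (exist _ f hf, ord_max) : in_E v 2) != inr ord0.
      by apply/eqP => /in_tgt_inr [hr _]; move: (nlr f hf); rewrite hr eqxx.
    by exists (inl (@mk_unt (insplit_graph v part) (inr ord0) _ (conj hs hr))).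
- move=> e f he hf hp; left.
  case=> [[x [hxs hxr]]|p] //= [] E.
  move: hxs hxr E; case: x => [[e' he']|[[e' he'] i]] /= hxs hxr E; subst e'.
  + by move: hxr; rewrite in_tgt_v // hp eqxx.
  + by move: (nls e he); rewrite he' eqxx.
Qed.

Lemma i_v1_out (G : graph) (v : gV G) (x : in_E v 2) :
  in_s x = inr ord0 -> sg (und_i x) = v.
Proof. by move=> h; rewrite -dvs_in_s h. Qed.

Lemma i_v1_out_inj (G : graph) (v : gV G) (x x' : in_E v 2) :
  in_s x = inr ord0 -> in_s x' = inr ord0 -> und_i x = und_i x' -> x = x'.
Proof.
move=> /in_s_inr [f [hf ->]] /in_s_inr [f' [hf' ->]] /= E; subst f'.
by congr inr; congr pair; apply: sig_eqP.
Qed.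

Lemma i_v1_in (G : graph) (v : gV G) (part : gE G -> 'I_2) (x : in_E v 2) :
  in_r part x = inr ord0 -> (rg (und_i x) = v /\ part (und_i x) = ord0) /\ dvs (in_s x) = sg (und_i x).
Proof.
move=> h; split; last exact: dvs_in_s.
by apply: in_tgt_inr; rewrite -in_r_und.
Qed.

Lemma i_v1_in_inj (G : graph) (v : gV G) (hl : ~ supports_loop v) (part : gE G -> 'I_2)
  (x x' : in_E v 2) :
  in_r part x = inr ord0 -> in_r part x' = inr ord0 ->
  dvs (in_s x) = dvs (in_s x') -> in_s x = in_s x'.
Proof.
move=> h _ E; apply: dvs_inj_ne => //.
case: (i_v1_in h) => [[hr _] ->]; apply/eqP => hs; apply: hl; exists (und_i x); done.
Qed.

Lemma i_u_in (G : graph) (v : gV G) (hl : ~ supports_loop v) (part : gE G -> 'I_2)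
  (y : gE (i_H1 hl part)) :
  rg y = i_u hl part -> exists e, i_de hl part y = inl e /\ rg e = v /\ part e = ord_max
     /\ i_dv hl part (sg y) = sg e.
Proof.
case: y => [[x hx]|[[a b] [ha hb]]] /= E.
- exists (und_i x); move: E => /(congr1 sval) /= E.
  have : in_tgt v part (und_i x) = inr ord_max by rewrite -in_r_und.
  move/in_tgt_inr => [h1 h2]; do 3 (split => //).
  by rewrite /i_dv /= dvs_in_s.
- exfalso; move: E => /(congr1 sval) /= E.
  have : in_tgt v part (und_i b) = inr ord_max by rewrite -in_r_und.
  move/in_tgt_inr => [hr _]; apply: hl; exists (und_i b); split => //.
  by rewrite -dvs_in_s; have -> : in_s b = inr ord0 by [].
Qed.


Lemma main (a : nat) : forall b (G : graph) (v : gV G) (hl : ~ supports_loop v),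
  (exists e, sg e = v) -> outb (fun e => sg e = v) a -> srcb (fun e => rg e = v) b ->
  forall H, graph_iso H (collapse_graph hl) -> move_eq G H.
Proof.
elim/ltn_ind: a => a IHa b; elim/ltn_ind: b => b IHb G v hl [e0 he0] Ha Hb H HI.
have nlr : forall f, sg f = v -> rg f != v.
  by move=> f hf; apply/eqP => hr; apply: (hl); exists f.
have nls : forall e, rg e = v -> sg e != v.
  by move=> e he; apply/eqP => hs; apply: (hl); exists e.
have hreg : is_regular v := regular_of he0 Ha.
case: (classic (exists e, rg e = v)) => [[e1 he1]|hsrc]; last first.
  have hsrc' : is_source v by move=> e he; apply: hsrc; exists e.
  apply: meq_step; apply: (move_S hreg hsrc').
  exact: iso_trans HI (iso_sym (crep_iso hl (del_crep hsrc'))).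
case: (classic (exists f1 f2, sg f1 = v /\ sg f2 = v /\ f1 <> f2)) => [[f1 [f2 [hf1 [hf2 hne]]]]|hone].
  pose part (e : gE G) : 'I_2 := if excluded_middle_informative (e = f1) then ord0 else ord_max.
  have hpart : forall e, part e = ord0 <-> e = f1.
    by move=> e; rewrite /part; case: excluded_middle_informative.
  have hpart' : forall e, part e = ord_max <-> e <> f1.
    by move=> e; rewrite /part; case: excluded_middle_informative.
  have a2 : 1 < a.
    case: Ha => g [g1 g2].
    have : g f1 <> g f2 by move=> E; apply: hne; apply: g2.
    have := g1 _ hf1; have := g1 _ hf2; lia.
  have mO : move_step G (outsplit_graph v part).
    apply: (move_O (v := v)); last exact: iso_refl.
    - by move=> hs; apply: (hs e0).
    - move=> i; case: (I2_cases i) => ->.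
      + by exists f1; split => //; apply/hpart.
      + by exists f2; split => //; apply/hpart' => E; apply: hne; rewrite E.
    - move=> i j hij; case: (I2_cases i) => Ei; rewrite Ei in hij *.
      + by left; exists 1, (fun _ => f1) => e [_ /hpart ->]; exists ord0.
      + have -> : j = ord0 by case: (I2_cases j) => // E; move: hij; rewrite E eqxx.
        by right; exists 1, (fun _ => f1) => e [_ /hpart ->]; exists ord0.
  have IH1 : move_eq (outsplit_graph v part) (o_H1 hl part).
    apply: (IHa 1 a2 b _ _ (@out_noloop G v hl 2 part ord0)); last exact: iso_refl.
    - exists (inl (exist _ f1 (nlr f1 hf1))); rewrite /= out_src_v //.
      by congr inr; apply/hpart.
    - apply: (outb_tr (K := outsplit_graph v part) (Q := fun e => e = f1) (d := @und_o G v 2)).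
      + by exists (fun _ => 0); split => // e e' -> ->.
      + by move=> x hx; apply/hpart; case: (o_v1_out hx).
      + move=> x x' hx hx'; exact: o_v1_out_inj hl part x x' hx hx'.
    - apply: (srcb_tr (K := outsplit_graph v part) (d := @und_o G v 2) (dv := @dvs G v 2) Hb).
      + move=> x hx; exact: o_v1_in part x hx.
      + move=> x x' hx hx'; exact: o_v1_in_inj hl part x x' hx hx'.
  pose C := o_prep hl part.
  pose hl2 := prep_noloop hl C.
  have IH2 : move_eq (o_H1 hl part) H.
    have a1 : a.-1 < a by lia.
    apply: (IHa a.-1 a1 b _ _ hl2).
    - have hp2 : part f2 <> ord0 by move/hpart => E; apply: hne; rewrite E.
      case: (pr_esurj3 C he1 hf2 hp2) => _ [y Ey].
      by exists y; apply: (prep_sg_u C Ey).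
    - have := outb_rem Ha hf1.
      move/(outb_tr (Pk := fun y => sg y = o_u hl part) (d := fun y => prj (o_de hl part y))).
      apply.
      + move=> y hy; case: (o_u_out hy) => f [-> [h1 h2]]; split => //.
        by apply/hpart'.
      + move=> y y' hy hy'; case: (o_u_out hy) => f [E [_ _]].
        case: (o_u_out hy') => f' [E' [_ _]]; rewrite E E' /= => ?; subst f'.
        by apply: (pr_einj C); rewrite E E'.
    - apply: (srcb_tr (d := fun y => prj (o_de hl part y)) (dv := o_dv hl part) Hb).
      + move=> y hy; case: (prep_in hl C hy) => e [E [h1 h2]]; by rewrite E.
      + by move=> y y' _ _ /(pr_vinj C).
    - exact: iso_trans HI (iso_sym (crep_iso hl (prep_collapse hl hl2 C))).
  exact: meq_trans (meq_step mO) (meq_trans IH1 IH2).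
have hf : forall e, sg e = v -> e = e0.
  move=> e he; apply: NNPP => hne; apply: hone; by exists e, e0.
case: (classic (exists e1 e2, rg e1 = v /\ rg e2 = v /\ sg e1 <> sg e2)) => [[e1' [e2 [h1 [h2 hne]]]]|hsame]; last first.
  apply: meq_step; apply: (move_R he0 (hf := hf) (hrf := nlr e0 he0) hreg).
  - exists (sg e1) => e he; apply: NNPP => hn; apply: hsame; by exists e, e1.
  - exact: iso_trans HI (iso_sym (crep_iso hl (red_crep he0 hf (nlr e0 he0)))).
pose w1 := sg e1'.
pose part (e : gE G) : 'I_2 := if sg e == w1 then ord0 else ord_max.
have hpart : forall e, part e = ord0 <-> sg e = w1.
  by move=> e; rewrite /part; case: eqP.
have hpart' : forall e, part e = ord_max <-> sg e <> w1.
  by move=> e; rewrite /part; case: eqP.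
have b2 : 1 < b.
  case: Hb => g [g1 g2].
  have : g (sg e1') <> g (sg e2) by move=> E; apply: hne; apply: g2.
  have := g1 _ h1; have := g1 _ h2; lia.
have mI : move_step G (insplit_graph v part).
  apply: (move_I (v := v) hreg); last exact: iso_refl.
  - by move=> hs; apply: (hs e1').
  - move=> i; case: (I2_cases i) => ->.
    + by exists e1'; split => //; apply/hpart.
    + by exists e2; split => //; apply/hpart'; move=> E; apply: hne.
have IH1 : move_eq (insplit_graph v part) (i_H1 hl part).
  apply: (IHb 1 b2 _ _ (@in_noloop G v hl 2 part ord0)); last exact: iso_refl.
  - by exists (inr (exist _ e0 he0, ord0)).
  - apply: (outb_tr (K := insplit_graph v part) (d := @und_i G v 2) Ha).
    + by move=> x hx; apply: i_v1_out.
    + by move=> x x' hx hx'; apply: i_v1_out_inj.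
  - apply: (srcb_tr (K := insplit_graph v part) (Q := fun e => rg e = v /\ part e = ord0) (d := @und_i G v 2) (dv := @dvs G v 2)).
    + exists (fun _ => 0); split => // e e' [_ /hpart ->] [_ /hpart ->] _; done.
    + move=> x hx; exact: i_v1_in part x hx.
    + move=> x x' hx hx'; exact: i_v1_in_inj hl part x x' hx hx'.
pose C := i_prep hl part.
pose hl2 := prep_noloop hl C.
have IH2 : move_eq (i_H1 hl part) H.
  have b1 : b.-1 < b by lia.
  apply: (IHb b.-1 b1 _ _ hl2).
  - have hp2 : part e2 <> ord0 by move/hpart => E; apply: hne.
    case: (pr_esurj3 C h2 he0 hp2) => _ [y Ey].
    by exists y; apply: (prep_sg_u C Ey).
  - apply: (outb_tr (d := fun y => prj (i_de hl part y)) Ha).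
    + by move=> y hy; case: (prep_out hl C hy) => f [-> [h3 _]].
    + move=> y y' hy hy'; case: (prep_out hl C hy) => f [E [_ _]].
      case: (prep_out hl C hy') => f' [E' [_ _]]; rewrite E E' /= => ?; subst f'.
      by apply: (pr_einj C); rewrite E E'.
  - have := srcb_rem Hb h1.
    move/(srcb_tr (Pk := fun y => rg y = i_u hl part) (d := fun y => prj (i_de hl part y)) (dv := i_dv hl part)).
    apply.
    + move=> y hy; case: (i_u_in hy) => e [-> [h3 [h4 h5]]]; split => //.
      by split => //; apply/hpart'.
    + by move=> y y' _ _ /(pr_vinj C).
  - exact: iso_trans HI (iso_sym (crep_iso hl (prep_collapse hl hl2 C))).
exact: meq_trans (meq_step mI) (meq_trans IH1 IH2).
Qed.

Theorem theorem5p2 (G : graph) (v : gV G)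
  (hreg : is_regular v) (hl : ~ supports_loop v) :
  move_eq G (collapse_graph hl).
Proof.
have [e0 he0] : exists e, sg e = v.
  apply: NNPP => hn; apply: hreg; left => e he; apply: hn; by exists e.
have [n [c hc]] : finite_set (fun e : gE G => sg e = v).
  by apply: NNPP => hn; apply: hreg; right.
have inh : inhabited 'I_n by case: (hc e0 he0) => i _; exact: (inhabits i).
apply: (@main n #|gV G| G v hl (ex_intro _ e0 he0)); last exact: iso_refl.
- exists (fun e => nat_of_ord (epsilon inh (fun i => c i = e))); split.
    by move=> e _.
  move=> e e' he he' E.
  have E1 := epsilon_spec inh (fun i => c i = e) (hc e he).
  have E2 := epsilon_spec inh (fun i => c i = e') (hc e' he').
  by rewrite -E1 -E2 (val_inj E).
- exists (fun w => nat_of_ord (enum_rank w)); split => //.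
  by move=> e e' _ _ /val_inj /enum_rank_inj.
Qed.
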